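(* Let $B$ be any group and $p\ge 2$ an integer. If $w\in(B\wr C_p)'$, then $w$ can be written in wreath-recursion form as $$w=\Big(r_1,r_2,\dots,r_{p-1},\ r_1^{-1}\cdots r_{p-1}^{-1}\prod_{j=1}^{k}[f_j,g_j]\Big),$$ where $r_1,\dots,r_{p-1},f_j,g_j\in B$ and $k\le cw(B)$.
   Context: $B\wr C_p=B^p\rtimes C_p$ with $C_p$ acting on $\{1,\dots,p\}$ by cyclic shifts; elements are written $(g_1,\dots,g_p)\pi$ with multiplication $(g_1,\dots,g_p)\pi\cdot(h_1,\dots,h_p)\tau=(g_1h_{\pi(1)},\dots,g_ph_{\pi(p)})\pi\tau$. $[a,b]=aba^{-1}b^{-1}$. The commutator width $cw(G)$ of a group $G$ is the least $n$ such that every element of $G'$ is a product of at most $n$ commutators ($\infty$ if no such $n$ exists). *)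

(* Defs.v *)
From mathcomp Require Import all_boot.
Set Implicit Arguments. Unset Strict Implicit. Unset Printing Implicit Defensive.

Record group := Group {
  gcar :> Type;
  gmul : gcar -> gcar -> gcar;
  gone : gcar;
  ginv : gcar -> gcar;
  gmulA : forall x y z, gmul x (gmul y z) = gmul (gmul x y) z;
  gmul1 : forall x, gmul gone x = x;
  gmulV : forall x, gmul (ginv x) x = gone
}.

Definition commT (T : Type) (mul : T -> T -> T) (inv : T -> T) (a b : T) : T :=
  mul (mul (mul a b) (inv a)) (inv b).

Inductive in_derived (T : Type) (mul : T -> T -> T) (inv : T -> T) : T -> Prop :=
  | der_comm a b : in_derived mul inv (commT mul inv a b)
  | der_mul x y : in_derived mul inv x -> in_derived mul inv y ->
                  in_derived mul inv (mul x y)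
  | der_inv x : in_derived mul inv x -> in_derived mul inv (inv x).

Section GroupDefs.
Variable B : group.

Definition comm (a b : B) : B := commT (@gmul B) (@ginv B) a b.

Definition gprod (s : seq B) : B := foldr (@gmul B) (gone B) s.

Definition prod_le_comms (n : nat) (x : B) : Prop :=
  exists s : seq (B * B), size s <= n /\ x = gprod [seq comm u.1 u.2 | u <- s].

Definition cw_bound (n : nat) : Prop :=
  forall x : B, in_derived (@gmul B) (@ginv B) x -> prod_le_comms n x.

(* is_cw c : the commutator width of B equals c (None = infinity). *)
Definition is_cw (c : option nat) : Prop :=
  match c with
  | Some n => cw_bound n /\ (forall m, cw_bound m -> n <= m)
  | None => forall n, ~ cw_bound n
  end.
End GroupDefs.

Definition le_ext (k : nat) (c : option nat) : Prop :=
  match c with Some n => k <= n | None => True end.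

(* The wreath product B wr C_p: elements (g_1,...,g_p) pi, pi a cyclic shift
   i |-> i + k (mod p), represented by k : 'I_p. Indices 0..p-1. *)
Record wr (B : group) (p : nat) := Wr { wbase : 'I_p -> B; wtop : 'I_p }.

Lemma ord_pos p (i : 'I_p) : 0 < p.
Proof. exact: leq_ltn_trans (leq0n i) (ltn_ord i). Qed.

Definition shift p (k i : 'I_p) : 'I_p := Ordinal (ltn_pmod (i + k) (ord_pos i)).
Definition shiftinv p (k : 'I_p) : 'I_p := Ordinal (ltn_pmod (p - k) (ord_pos k)).

Section Wreath.
Variables (B : group) (p : nat).

(* (g,pi)(h,tau) = (i |-> g_i h_{pi(i)}, pi tau) *)
Definition wmul (x y : wr B p) : wr B p :=
  Wr (fun i => gmul (wbase x i) (wbase y (shift (wtop x) i)))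
     (shift (wtop x) (wtop y)).

Definition winv (x : wr B p) : wr B p :=
  Wr (fun i => ginv (wbase x (shift (shiftinv (wtop x)) i))) (shiftinv (wtop x)).
End Wreath.

(* Main.v *)
Require Import Defs.
From mathcomp Require Import all_boot.
From Stdlib Require Import Classical.
From mathcomp Require Import zify.
Set Implicit Arguments. Unset Strict Implicit.

Local Notation "a ⋅ b" := (gmul a b) (at level 40, left associativity).


Lemma mulgV (B : group) (x : B) : x ⋅ ginv x = gone B.
Proof.
by rewrite -[x ⋅ ginv x]gmul1 -(gmulV (ginv x)) -gmulA (gmulA (ginv x)) gmulV gmul1 gmulV.
Qed.

Lemma mulg1 (B : group) (x : B) : x ⋅ gone B = x.
Proof. by rewrite -(gmulV x) gmulA mulgV gmul1. Qed.

Lemma inv_uniq (B : group) (a b : B) : a ⋅ b = gone B -> ginv a = b.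
Proof. by move=> h; rewrite -[ginv a]mulg1 -h gmulA gmulV gmul1. Qed.

Lemma invinv (B : group) (x : B) : ginv (ginv x) = x.
Proof. by apply: inv_uniq; rewrite gmulV. Qed.

Lemma inv1 (B : group) : ginv (gone B) = gone B.
Proof. by apply: inv_uniq; rewrite gmul1. Qed.

Lemma invM (B : group) (x y : B) : ginv (x ⋅ y) = ginv y ⋅ ginv x.
Proof.
by apply: inv_uniq; rewrite -gmulA (gmulA y) mulgV gmul1 mulgV.
Qed.

Lemma mulKg (B : group) (x y : B) : ginv x ⋅ (x ⋅ y) = y.
Proof. by rewrite gmulA gmulV gmul1. Qed.

Lemma mulVKg (B : group) (x y : B) : x ⋅ (ginv x ⋅ y) = y.
Proof. by rewrite gmulA mulgV gmul1. Qed.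

Ltac gsimpl := repeat progress (rewrite ?(invM, invinv, inv1) -?gmulA ?(mulKg, mulVKg, gmulV, mulgV, gmul1, mulg1)).

Definition D (B : group) (x : B) := in_derived (@gmul B) (@ginv B) x.

Lemma D1 (B : group) : D (gone B).
Proof.
have := der_comm (@gmul B) (@ginv B) (gone B) (gone B).
by rewrite /commT; gsimpl.
Qed.

Lemma Dconj (B : group) (c d : B) : D d -> D (c ⋅ d ⋅ ginv c).
Proof.
move=> hd.
have := der_mul (der_comm (@gmul B) (@ginv B) c d) hd.
by rewrite /commT; gsimpl.
Qed.

Definition eqv (B : group) (a b : B) := D (a ⋅ ginv b).

Lemma eqv_refl (B : group) (a : B) : eqv a a.
Proof. by rewrite /eqv mulgV; apply: D1. Qed.

Lemma eqv_sym (B : group) (a b : B) : eqv a b -> eqv b a.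
Proof. by move=> h; have := der_inv h; rewrite /eqv; gsimpl. Qed.

Lemma eqv_trans (B : group) (a b c : B) : eqv a b -> eqv b c -> eqv a c.
Proof. by move=> h1 h2; have := der_mul h1 h2; rewrite /eqv; gsimpl. Qed.

Lemma eqv_mull (B : group) (a b c : B) : eqv a b -> eqv (c ⋅ a) (c ⋅ b).
Proof. by move=> h; have := Dconj c h; rewrite /eqv; gsimpl. Qed.

Lemma eqv_mulr (B : group) (a b c : B) : eqv a b -> eqv (a ⋅ c) (b ⋅ c).
Proof. by move=> h; rewrite /eqv; gsimpl. Qed.

Lemma eqv_mul (B : group) (a b c d : B) : eqv a b -> eqv c d -> eqv (a ⋅ c) (b ⋅ d).
Proof. by move=> h1 h2; apply: eqv_trans (eqv_mull a h2) (eqv_mulr d h1). Qed.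

Lemma eqv_comm (B : group) (a b : B) : eqv (a ⋅ b) (b ⋅ a).
Proof.
have := der_comm (@gmul B) (@ginv B) a b.
by rewrite /eqv /commT; gsimpl.
Qed.

Lemma eqv_inv (B : group) (a b : B) : eqv a b -> eqv (ginv a) (ginv b).
Proof.
move=> h; have := Dconj (ginv a) (eqv_sym h).
by rewrite /eqv; gsimpl.
Qed.

Lemma eqv_D (B : group) (a : B) : eqv a (gone B) -> D a.
Proof. by rewrite /eqv inv1 mulg1. Qed.

Lemma D_eqv (B : group) (a : B) : D a -> eqv a (gone B).
Proof. by rewrite /eqv inv1 mulg1. Qed.

Lemma gprod_cat (B : group) (s t : seq B) : gprod (s ++ t) = gprod s ⋅ gprod t.
Proof. by elim: s => [|x s IH] /=; rewrite ?gmul1 // IH gmulA. Qed.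

Lemma gprod_map_mul (B : group) (T : Type) (f g : T -> B) (s : seq T) :
  eqv (gprod [seq f i ⋅ g i | i <- s]) (gprod (map f s) ⋅ gprod (map g s)).
Proof.
elim: s => [|x s IH] /=; first by rewrite gmul1; apply: eqv_refl.
apply: eqv_trans (eqv_mull _ IH) _.
rewrite -!gmulA; apply: eqv_mull.
rewrite !gmulA; apply: eqv_mulr; apply: eqv_comm.
Qed.

Lemma gprod_map_inv (B : group) (T : Type) (f : T -> B) (s : seq T) :
  eqv (gprod [seq ginv (f i) | i <- s]) (ginv (gprod (map f s))).
Proof.
elim: s => [|x s IH] /=; first by rewrite inv1; apply: eqv_refl.
apply: eqv_trans (eqv_mull _ IH) _.
rewrite invM; apply: eqv_comm.
Qed.

Lemma gprod_perm (B : group) (T : eqType) (h : T -> B) (s t : seq T) :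
  perm_eq s t -> eqv (gprod (map h s)) (gprod (map h t)).
Proof.
move=> pst.
apply: (@catCA_perm_ind T (fun u => eqv (gprod (map h s)) (gprod (map h u)))) pst _;
  last by apply: eqv_refl.
move=> s1 s2 s3 H; apply: eqv_trans H _.
rewrite !map_cat !gprod_cat !gmulA; apply: eqv_mulr; apply: eqv_comm.
Qed.

Lemma shift_inj p (k : 'I_p) : injective (shift k).
Proof.
move=> i j /(congr1 val) /= /eqP.
rewrite eqn_modDr !modn_small // => /eqP h; exact: val_inj.
Qed.

Lemma perm_shift p (k : 'I_p) : perm_eq (map (shift k) (enum 'I_p)) (enum 'I_p).
Proof.
have u1 : uniq (map (shift k) (enum 'I_p)) by rewrite map_inj_uniq ?enum_uniq //; apply: shift_inj.
have hs : size (enum 'I_p) <= size (map (shift k) (enum 'I_p)) by rewrite size_map.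
have [_ e] := uniq_min_size u1 (fun x _ => mem_enum _ x) hs.
apply: uniq_perm => //; exact: enum_uniq.
Qed.

Definition Pi (B : group) p (x : wr B p) : B := gprod [seq wbase x i | i <- enum 'I_p].

Lemma Pi_mul (B : group) p (x y : wr B p) : eqv (Pi (wmul x y)) (Pi x ⋅ Pi y).
Proof.
rewrite /Pi /=; apply: eqv_trans (gprod_map_mul _ _ _) _.
apply: eqv_mull.
have := gprod_perm (wbase y) (perm_shift (wtop x)); by rewrite -map_comp.
Qed.

Lemma Pi_inv (B : group) p (x : wr B p) : eqv (Pi (winv x)) (ginv (Pi x)).
Proof.
rewrite /Pi /=; apply: eqv_trans (gprod_map_inv _ _) _.
apply: eqv_inv.
have := gprod_perm (wbase x) (perm_shift (shiftinv (wtop x))); by rewrite -map_comp.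
Qed.

Lemma derived_wr (B : group) p (w : wr B p) :
  in_derived (@wmul B p) (@winv B p) w -> D (Pi w) /\ nat_of_ord (wtop w) = 0.
Proof.
elim => [a b | x y _ [hx tx] _ [hy ty] | x _ [hx tx]].
- split.
  + apply: eqv_D; rewrite /commT.
    apply: eqv_trans (Pi_mul _ _) _.
    apply: eqv_trans (eqv_mul (Pi_mul _ _) (Pi_inv _)) _.
    apply: eqv_trans (eqv_mulr _ (eqv_mull _ (Pi_inv _))) _.
    apply: eqv_trans (eqv_mulr _ (eqv_mulr _ (Pi_mul _ _))) _.
    apply: D_eqv; have := der_comm (@gmul B) (@ginv B) (Pi a) (Pi b); by rewrite /commT.
  + rewrite /= !(modnDml, modnDmr).
    have ha := ltn_ord (wtop a); have hb := ltn_ord (wtop b).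
    rewrite addnA modnDmr addnAC modnDmr.
    rewrite (_ : _ + _ = 2 * p) ?modnMl //; lia.
- split.
  + apply: eqv_D; apply: eqv_trans (Pi_mul _ _) _.
    rewrite -(gmul1 (gone B)); apply: eqv_mul; exact: D_eqv.
  + by rewrite /= tx ty mod0n.
- split.
  + apply: eqv_D; apply: eqv_trans (Pi_inv _) _.
    rewrite -inv1; apply: eqv_inv; exact: D_eqv.
  + by rewrite /= tx subn0 modnn.
Qed.

Lemma least_ex (P : nat -> Prop) n : P n -> exists m, P m /\ forall k, P k -> m <= k.
Proof.
elim/ltn_ind: n => n IH Pn.
case: (classic (exists m, m < n /\ P m)) => [[m [lt Pm]]|H]; first exact: IH Pm.
exists n; split => // k Pk; rewrite leqNgt; apply/negP => lt; apply: H; by exists k.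
Qed.

Lemma cw_exists (B : group) : exists c, is_cw B c.
Proof.
case: (classic (exists n, cw_bound B n)) => [[n hn]|H].
  have [m [hm hl]] := least_ex hn; by exists (Some m).
exists None => n hn; apply: H; by exists n.
Qed.

Lemma comm_inv (B : group) (a b : B) : ginv (comm a b) = comm b a.
Proof. by rewrite /comm /commT; gsimpl. Qed.

Lemma derived_comms (B : group) (x : B) : D x ->
  exists s : seq (B * B), x = gprod [seq comm u.1 u.2 | u <- s].
Proof.
elim => [a b | y z _ [s1 e1] _ [s2 e2] | y _ [s e]].
- by exists [:: (a, b)]; rewrite /= mulg1.
- by exists (s1 ++ s2); rewrite map_cat gprod_cat e1 e2.
- exists (rev [seq (u.2, u.1) | u <- s]); rewrite e; clear e.
  elim: s => [|u s IH] /=; first by rewrite inv1.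
  rewrite rev_cons map_rcons -cats1 gprod_cat invM IH /= mulg1 comm_inv.
  by [].
Qed.

Theorem lemma2 (B : group) (p : nat) (hp : 2 <= p) (w : wr B p) :
  in_derived (@wmul B p) (@winv B p) w ->
  exists (r : nat -> B) (k : nat) (f g : nat -> B),
    (exists c : option nat, is_cw B c /\ le_ext k c) /\
    nat_of_ord (wtop w) = 0 /\
    (forall i : 'I_p, i < p.-1 -> wbase w i = r i) /\
    (forall i : 'I_p, nat_of_ord i = p.-1 ->
       wbase w i = gmul (gprod [seq ginv (r j) | j <- iota 0 p.-1])
                        (gprod [seq comm (f j) (g j) | j <- iota 0 k])).
Proof.
move=> hw; have [hD ht] := derived_wr hw.
move: hp w hw hD ht; case: p => [|[|n]] // _ w _ hD ht /=.
pose r := fun j => wbase w (inord j).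
pose P := gprod [seq ginv (r j) | j <- iota 0 n.+1].
pose c := gmul (ginv P) (wbase w ord_max).
have hc : D c.
  apply: eqv_D; apply: eqv_trans (eqv_mulr _ (eqv_inv (gprod_map_inv _ _))) _.
  rewrite invinv; apply: D_eqv.
  suff -> : gprod [seq r i | i <- iota 0 n.+1] ⋅ wbase w ord_max = Pi w by [].
  rewrite /Pi.
  have -> : enum 'I_n.+2 = map inord (iota 0 n.+2).
    by rewrite -val_enum_ord -map_comp (eq_map (@inord_val _)) map_id.
  have -> : iota 0 n.+2 = iota 0 n.+1 ++ [:: n.+1] by rewrite -addn1 iotaD.
  rewrite !map_cat gprod_cat /= mulg1.
  rewrite -map_comp; congr (_ ⋅ wbase w _); apply: val_inj; by rewrite /= inordK.
have [cw hcw] := cw_exists B.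
have [s [hs1 hs2]] : exists s : seq (B * B), le_ext (size s) cw /\
    c = gprod [seq comm u.1 u.2 | u <- s].
  case: cw hcw => [m [hm _]|_].
    by have [s [h1 h2]] := hm c hc; exists s.
  by have [s e] := derived_comms hc; exists s.
exists r, (size s), (fun j => (nth (gone B, gone B) s j).1),
  (fun j => (nth (gone B, gone B) s j).2).
split; first by exists cw.
split => //.
split.
  move=> i _; by rewrite /r inord_val.
move=> i hi.
have -> : i = ord_max by apply: val_inj.
have -> : [seq comm (nth (gone B, gone B) s j).1 (nth (gone B, gone B) s j).2 | j <- iota 0 (size s)]
   = [seq comm u.1 u.2 | u <- s].
  by rewrite -[in RHS](mkseq_nth (gone B, gone B) s) /mkseq -map_comp.
by rewrite -hs2 /c mulVKg.
Qed.
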